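(* Let $U\subset \mathbb R^n$ and $V\subset \mathbb R^m$ be open and let $f:U\times V\to \mathbb R$ be upper-semicontinuous and bounded. For $\epsilon>0$ define $f^{\epsilon,p}(x,y)= \sup_{z\in U} \{ f(z,y) - \frac{1}{2\epsilon} \| z-x\|^2\}$ for $(x,y)\in U\times V$. Then: (i) if for each fixed $x$ the function $y\mapsto f(x,y)$ is convex, then $(x,y)\mapsto f^{\epsilon,p}(x,y) + \frac{1}{2\epsilon} \|x\|^2$ is convex; (ii) for $0<\epsilon'\le \epsilon$, $f \le f^{\epsilon',p} \le f^{\epsilon,p}$; (iii) with $\delta =2 (\epsilon \|f\|_{\infty})^{1/2}$, $f^{\epsilon,p}(x,y) = \sup_{\|\tau\|<\delta} \{ f(x+\tau,y) - \frac{1}{2\epsilon} \|\tau\|^2\}$ for $(x,y)\in U(\delta)\times V$; (iv) $\lim_{\epsilon\to 0^+} f^{\epsilon,p}(x,y) = f(x,y)$ for all $(x,y)\in U\times V$; (v) if $F$ is a constant-coefficient primitive subequation on $U$ with the Negativity Property and $f$ is $F\#\mathcal P$-subharmonic, then $f^{\epsilon,p}$ is $F\#\mathcal P$-subharmonic on $U(\delta)\times V$, with $\delta$ as in (iii).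
   Context: $U(\delta)=\{x\in\mathbb R^n: B_\delta(x)\subset U\}$ and $\|f\|_\infty=\sup|f|$. $J^2(U)=U\times\mathbb R\times\mathbb R^n\times\operatorname{Sym}^2_n$ ($\operatorname{Sym}^2_n$ = real symmetric $n\times n$ matrices), $J^2_n=\mathbb R\times\mathbb R^n\times\operatorname{Sym}^2_n$, and $F_x=\{(r,p,A):(x,r,p,A)\in F\}$. $F\subset J^2(U)$ is a primitive subequation if it is closed and $(r,p,A)\in F_x$, $P$ positive semidefinite imply $(r,p,A+P)\in F_x$; it is constant-coefficient if $F_x$ is independent of $x$; it has the Negativity Property if $(r,p,A)\in F_x$ and $r'\le r$ imply $(r',p,A)\in F_x$. For an upper-semicontinuous $h$ into $\mathbb R\cup\{-\infty\}$ on an open set $W\subset\mathbb R^k$ and $G\subset J^2(W)$: $(p,A)$ is an upper contact jet of $h$ at $w$ (with $h(w)\ne-\infty$) if $h(v)\le h(w)+p\cdot(v-w)+\frac12(v-w)^tA(v-w)$ for $v$ near $w$, and $h$ is $G$-subharmonic if $(h(w),p,A)\in G_w$ for all such jets. $\mathcal P\subset J^2(V)$ is $\{(y,r,p,D): D \text{ positive semidefinite}\}$. For $\Gamma\in\operatorname{Hom}(\mathbb R^n,\mathbb R^m)$ and $\alpha=(r,(p_1,p_2),\begin{pmatrix}B&C\\C^t&D\end{pmatrix})\in J^2_{n+m}$ set $i_\Gamma^*\alpha=(r,p_1+\Gamma^tp_2,B+C\Gamma+\Gamma^tC^t+\Gamma^tD\Gamma)$ and $j^*\alpha=(r,p_2,D)$;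 then $(F\#\mathcal P)_{(x,y)}=\{\alpha: i_\Gamma^*\alpha\in F_x\ \forall\Gamma,\ j^*\alpha\in\mathcal P_y\}$. *)

(* Defs.v *)
From HB Require Import structures.
From mathcomp Require Import all_boot all_order all_algebra.
From mathcomp Require Import all_classical all_reals all_analysis.
Set Implicit Arguments. Unset Strict Implicit. Unset Printing Implicit Defensive.
Import Order.TTheory GRing.Theory Num.Theory.
Import numFieldNormedType.Exports.
Local Open Scope classical_set_scope.
Local Open Scope ring_scope.

Section Defs.
Variable R : realType.

Definition dotp {k : nat} (u v : 'rV[R]_k) : R := (u *m v^T) 0 0.
Definition enorm {k : nat} (v : 'rV[R]_k) : R := Num.sqrt (dotp v v).
Definition quad {k : nat} (A : 'M[R]_k) (v : 'rV[R]_k) : R := (v *m A *m v^T) 0 0.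

Definition psd {k : nat} (P : 'M[R]_k) : Prop :=
  P^T = P /\ forall v : 'rV[R]_k, 0 <= quad P v.

Definition Udelta {k : nat} (U : set 'rV[R]_k) (delta : R) : set 'rV[R]_k :=
  [set x | forall z, enorm (z - x) <= delta -> U z].

Definition convex_on {k : nat} (S : set 'rV[R]_k) (g : 'rV[R]_k -> R) : Prop :=
  forall a b (t : R), 0 <= t <= 1 ->
    (forall s : R, 0 <= s <= 1 -> S ((1 - s) *: a + s *: b)) ->
    g ((1 - t) *: a + t *: b) <= (1 - t) * g a + t * g b.

Definition convex2_on {n m : nat} (U : set 'rV[R]_n) (V : set 'rV[R]_m)
  (g : 'rV[R]_n -> 'rV[R]_m -> R) : Prop :=
  forall a1 a2 b1 b2 (t : R), 0 <= t <= 1 ->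
    (forall s : R, 0 <= s <= 1 ->
       U ((1 - s) *: a1 + s *: a2) /\ V ((1 - s) *: b1 + s *: b2)) ->
    g ((1 - t) *: a1 + t *: a2) ((1 - t) *: b1 + t *: b2)
      <= (1 - t) * g a1 b1 + t * g a2 b2.

Definition usc_on {n m : nat} (W : 'rV[R]_n -> 'rV[R]_m -> Prop)
  (h : 'rV[R]_n -> 'rV[R]_m -> R) : Prop :=
  forall x y, W x y -> forall e : R, 0 < e -> exists2 d : R, 0 < d &
    forall x' y', W x' y' -> enorm (row_mx (x' - x) (y' - y)) < d ->
      h x' y' < h x y + e.

Definition supnorm {n m : nat} (U : set 'rV[R]_n) (V : set 'rV[R]_m)
  (f : 'rV[R]_n -> 'rV[R]_m -> R) : R :=
  sup [set r | exists x y, [/\ U x, V y & r = `|f x y|]].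

Definition fep {n m : nat} (U : set 'rV[R]_n) (f : 'rV[R]_n -> 'rV[R]_m -> R)
  (eps : R) (x : 'rV[R]_n) (y : 'rV[R]_m) : R :=
  sup [set f z y - (2 * eps)^-1 * enorm (z - x) ^+ 2 | z in U].

Definition delta_of {n m : nat} (U : set 'rV[R]_n) (V : set 'rV[R]_m)
  (f : 'rV[R]_n -> 'rV[R]_m -> R) (eps : R) : R :=
  2 * Num.sqrt (eps * supnorm U V f).

(* A constant-coefficient primitive subequation on U is U x F0 with
   F0 subset J^2_n = R x R^n x Sym^2_n closed and stable under adding psd
   matrices.  A jet (r,p,A) is a triple with A : 'M_n required symmetric. *)
Definition jet (k : nat) := (R * 'rV[R]_k * 'M[R]_k)%type.

Definition cc_primitive_subequation {n : nat} (F0 : set (jet n)) : Prop :=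
  [/\ closed F0,
      (forall r p A, F0 (r, p, A) -> A^T = A) &
      (forall r p A P, F0 (r, p, A) -> psd P -> F0 (r, p, A + P))].

Definition negativity_property {n : nat} (F0 : set (jet n)) : Prop :=
  forall r r' p A, F0 (r, p, A) -> r' <= r -> F0 (r', p, A).

(* A jet on
   R^(n+m) is (r, row_mx p1 p2, block_mx B C C^T D); Gamma : R^n -> R^m is
   the m x n matrix G, and with row vectors Gamma^t p2 is p2 *m G. *)
Definition FsharpP {n m : nat} (F0 : set (jet n)) (r : R)
  (p : 'rV[R]_(n + m)) (A : 'M[R]_(n + m)) : Prop :=
  (forall G : 'M[R]_(m, n),
     F0 (r, lsubmx p + rsubmx p *m G,
         ulsubmx A + ursubmx A *m G + G^T *m (ursubmx A)^T
           + G^T *m drsubmx A *m G))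
  /\ psd (drsubmx A).

Definition upper_contact_jet {n m : nat} (W : 'rV[R]_n -> 'rV[R]_m -> Prop)
  (h : 'rV[R]_n -> 'rV[R]_m -> R) (x : 'rV[R]_n) (y : 'rV[R]_m)
  (p : 'rV[R]_(n + m)) (A : 'M[R]_(n + m)) : Prop :=
  exists2 rho : R, 0 < rho &
    forall x' y', W x' y' -> enorm (row_mx (x' - x) (y' - y)) < rho ->
      h x' y' <= h x y + dotp p (row_mx (x' - x) (y' - y))
                 + 2^-1 * quad A (row_mx (x' - x) (y' - y)).

Definition subharmonic {n m : nat} (W : 'rV[R]_n -> 'rV[R]_m -> Prop)
  (G : R -> 'rV[R]_(n + m) -> 'M[R]_(n + m) -> Prop)
  (h : 'rV[R]_n -> 'rV[R]_m -> R) : Prop :=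
  usc_on W h /\
  forall x y, W x y -> forall p (A : 'M[R]_(n + m)), A^T = A ->
    upper_contact_jet W h x y p A -> G (h x y) p A.

End Defs.

(* Main.v *)
Require Import Defs.
From HB Require Import structures.
From mathcomp Require Import all_boot all_order all_algebra.
From mathcomp Require Import all_classical all_reals all_analysis.
From mathcomp Require Import ring lra.
Import Order.TTheory GRing.Theory Num.Theory.
Import numFieldNormedType.Exports.
Local Open Scope classical_set_scope.
Local Open Scope ring_scope.
Set Implicit Arguments. Unset Strict Implicit. Unset Printing Implicit Defensive.

Section Aux.
Context {R : realType}.

Lemma dotpE k (u v : 'rV[R]_k) : dotp u v = \sum_j u 0 j * v 0 j.
Proof. by rewrite /dotp !mxE; apply: eq_bigr => j _; rewrite mxE. Qed.

Lemma dotpC k (u v : 'rV[R]_k) : dotp u v = dotp v u.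
Proof. by rewrite !dotpE; apply: eq_bigr => j _; rewrite mulrC. Qed.

Lemma dotpDl k (u v w : 'rV[R]_k) : dotp (u + v) w = dotp u w + dotp v w.
Proof. by rewrite !dotpE -big_split; apply: eq_bigr => j _; rewrite mxE mulrDl. Qed.

Lemma dotpZl k a (u w : 'rV[R]_k) : dotp (a *: u) w = a * dotp u w.
Proof. by rewrite !dotpE mulr_sumr; apply: eq_bigr => j _; rewrite mxE mulrA. Qed.

Lemma dotpNl k (u w : 'rV[R]_k) : dotp (- u) w = - dotp u w.
Proof. by rewrite -scaleN1r dotpZl mulN1r. Qed.

Lemma dotpBl k (u v w : 'rV[R]_k) : dotp (u - v) w = dotp u w - dotp v w.
Proof. by rewrite dotpDl dotpNl. Qed.

Lemma dotpDr k (u v w : 'rV[R]_k) : dotp w (u + v) = dotp w u + dotp w v.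
Proof. by rewrite dotpC dotpDl !(dotpC w). Qed.
Lemma dotpZr k a (u w : 'rV[R]_k) : dotp w (a *: u) = a * dotp w u.
Proof. by rewrite dotpC dotpZl dotpC. Qed.
Lemma dotpBr k (u v w : 'rV[R]_k) : dotp w (u - v) = dotp w u - dotp w v.
Proof. by rewrite dotpC dotpBl !(dotpC w). Qed.
Lemma dotp0l k (w : 'rV[R]_k) : dotp 0 w = 0.
Proof. by rewrite dotpE big1 // => j _; rewrite mxE mul0r. Qed.
Lemma dotp0r k (w : 'rV[R]_k) : dotp w 0 = 0.
Proof. by rewrite dotpC dotp0l. Qed.

Lemma dotp_ge0 k (u : 'rV[R]_k) : 0 <= dotp u u.
Proof. by rewrite dotpE sumr_ge0 // => j _; rewrite -expr2 sqr_ge0. Qed.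

Lemma dotp_eq0 k (u : 'rV[R]_k) : dotp u u = 0 -> u = 0.
Proof.
rewrite dotpE => /eqP; rewrite psumr_eq0 => [/allP H|j _]; last by rewrite -expr2 sqr_ge0.
apply/rowP => j; rewrite mxE; have /H := mem_index_enum j.
by rewrite implyTb mulf_eq0 orbb => /eqP.
Qed.

Lemma enorm_ge0 k (u : 'rV[R]_k) : 0 <= enorm u.
Proof. exact: sqrtr_ge0. Qed.

Lemma enorm_sq k (u : 'rV[R]_k) : enorm u ^+ 2 = dotp u u.
Proof. by rewrite /enorm sqr_sqrtr // dotp_ge0. Qed.

Lemma dotp_row k l (a c : 'rV[R]_k) (b d : 'rV[R]_l) :
  dotp (row_mx a b) (row_mx c d) = dotp a c + dotp b d.
Proof. by rewrite /dotp tr_row_mx mul_row_col mxE. Qed.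


Lemma le_sq (x y : R) : 0 <= y -> x ^+ 2 <= y ^+ 2 -> x <= y.
Proof. move=> *; nra. Qed.

Lemma dotp_amgm k (a b : 'rV[R]_k) t : 0 < t ->
  2 * dotp a b <= t * dotp a a + t^-1 * dotp b b.
Proof.
move=> t0; have := dotp_ge0 (t *: a - b).
rewrite !(dotpBl, dotpBr, dotpZl, dotpZr) (dotpC b a) => H.
rewrite -(@ler_pM2l _ t) // mulrDr [t * (t^-1 * _)]mulrA mulfV ?gt_eqF // mul1r.
nra.
Qed.

Lemma cs k (a b : 'rV[R]_k) : dotp a b <= enorm a * enorm b.
Proof.
have [/eqP na0|na0] := eqVneq (enorm a) 0.
  move: na0; rewrite -sqrf_eq0 enorm_sq => /eqP /dotp_eq0 ->.
  by rewrite dotp0l mulr_ge0 ?enorm_ge0.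
have [/eqP nb0|nb0] := eqVneq (enorm b) 0.
  move: nb0; rewrite -sqrf_eq0 enorm_sq => /eqP /dotp_eq0 ->.
  by rewrite dotp0r mulr_ge0 ?enorm_ge0.
have pa : 0 < enorm a by rewrite lt_def na0 enorm_ge0.
have pb : 0 < enorm b by rewrite lt_def nb0 enorm_ge0.
have := dotp_amgm a b (divr_gt0 pb pa).
rewrite -!enorm_sq invf_div => H.
have E1 : enorm b / enorm a * enorm a ^+ 2 = enorm a * enorm b.
  by rewrite expr2 mulrA divfK ?gt_eqF // mulrC.
have E : enorm a / enorm b * enorm b ^+ 2 = enorm a * enorm b.
  by rewrite expr2 mulrA divfK ?gt_eqF.
rewrite E E1 in H; lra.
Qed.

Lemma cs_abs k (a b : 'rV[R]_k) : `|dotp a b| <= enorm a * enorm b.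
Proof.
rewrite ler_norml cs andbT; have := cs (- a) b.
rewrite dotpNl /enorm.
have -> : dotp (- a) (- a) = dotp a a by rewrite dotpNl dotpC dotpNl opprK.
lra.
Qed.


Lemma lt_sq (x y : R) : 0 <= y -> x ^+ 2 < y ^+ 2 -> x < y.
Proof. move=> *; nra. Qed.

Lemma sq_le (x y : R) : 0 <= x -> x <= y -> x ^+ 2 <= y ^+ 2.
Proof. move=> *; nra. Qed.

Lemma enorm_sq_expand k (a h : 'rV[R]_k) :
  enorm (a + h) ^+ 2 = enorm a ^+ 2 + 2 * dotp a h + enorm h ^+ 2.
Proof. by rewrite !enorm_sq !(dotpDl, dotpDr) (dotpC h a); ring. Qed.

Lemma enorm_triangle k (a b : 'rV[R]_k) : enorm (a + b) <= enorm a + enorm b.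
Proof.
apply: le_sq; first by rewrite addr_ge0 ?enorm_ge0.
rewrite enorm_sq_expand; have := cs a b; nra.
Qed.

Lemma enormN k (a : 'rV[R]_k) : enorm (- a) = enorm a.
Proof. by rewrite /enorm dotpNl dotpC dotpNl opprK. Qed.

Lemma enormB k (a b : 'rV[R]_k) : enorm (a - b) = enorm (b - a).
Proof. by rewrite -enormN opprB. Qed.

Lemma enorm0 k : enorm (0 : 'rV[R]_k) = 0.
Proof. by rewrite /enorm dotp0l sqrtr0. Qed.

Lemma enormZ k t (a : 'rV[R]_k) : enorm (t *: a) = `|t| * enorm a.
Proof.
apply/eqP; rewrite -(@eqrXn2 _ 2) // ?mulr_ge0 ?enorm_ge0 //.
by rewrite exprMn !enorm_sq dotpZl dotpZr mulrA -expr2 real_normK ?num_real.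
Qed.

Lemma enorm_sq_lb k (a h : 'rV[R]_k) :
  enorm a ^+ 2 - (2 * enorm a + enorm h) * enorm h <= enorm (a + h) ^+ 2.
Proof.
rewrite enorm_sq_expand; have := cs_abs a h; rewrite ler_norml => /andP[H1 H2].
have := enorm_ge0 h; nra.
Qed.

Lemma enorm_sq_ub k (a h : 'rV[R]_k) :
  enorm (a + h) ^+ 2 <= enorm a ^+ 2 + (2 * enorm a + enorm h) * enorm h.
Proof.
rewrite enorm_sq_expand; have := cs_abs a h; rewrite ler_norml => /andP[H1 H2].
have := enorm_ge0 h; nra.
Qed.

Lemma enorm_row_sq k l (a : 'rV[R]_k) (b : 'rV[R]_l) :
  enorm (row_mx a b) ^+ 2 = enorm a ^+ 2 + enorm b ^+ 2.
Proof. by rewrite !enorm_sq dotp_row. Qed.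

Lemma enorm_row_l k l (a : 'rV[R]_k) (b : 'rV[R]_l) : enorm a <= enorm (row_mx a b).
Proof.
apply: le_sq; first exact: enorm_ge0.
by rewrite enorm_row_sq lerDl sqr_ge0.
Qed.

Lemma enorm_row_r k l (a : 'rV[R]_k) (b : 'rV[R]_l) : enorm b <= enorm (row_mx a b).
Proof.
apply: le_sq; first exact: enorm_ge0.
by rewrite enorm_row_sq lerDr sqr_ge0.
Qed.

Lemma enorm_row0 k l (a : 'rV[R]_k) : enorm (row_mx a (0 : 'rV[R]_l)) = enorm a.
Proof.
apply/eqP; rewrite -(@eqrXn2 _ 2) // ?enorm_ge0 //.
by rewrite enorm_row_sq enorm0 expr0n addr0.
Qed.

Lemma entry_le_enorm k (v : 'rV[R]_k) j : `|v 0 j| <= enorm v.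
Proof.
apply: le_sq; first exact: enorm_ge0.
rewrite enorm_sq dotpE (bigD1 j) //= real_normK ?num_real // expr2 lerDl.
by apply: sumr_ge0 => i _; rewrite -expr2 sqr_ge0.
Qed.

Lemma mxnorm_le_enorm k (v : 'rV[R]_k) : `|v| <= enorm v.
Proof.
rewrite [leLHS]/Num.norm /= mx_normrE; apply/bigmax_leP; split; first exact: enorm_ge0.
by move=> [i j] _ /=; rewrite (ord1 i); exact: entry_le_enorm.
Qed.

Lemma entry_le_mxnorm k (v : 'rV[R]_k) j : `|v 0 j| <= `|v|.
Proof.
rewrite [leRHS]/Num.norm /= mx_normrE.
have /mapP[i Hi ->] : `|v 0 j| \in [seq `|v x.1 x.2| | x : 'I_1 * 'I_k].
  by apply/mapP; exists (0, j) => //=; rewrite mem_enum.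
by apply/bigmax_geP; right => /=; exists i.
Qed.

Lemma dotp_le_mxnorm k (v : 'rV[R]_k) : dotp v v <= k%:R * `|v| ^+ 2.
Proof.
rewrite dotpE; apply: le_trans (_ : \sum_(j < k) `|v| ^+ 2 <= _).
  apply: ler_sum => j _; rewrite -expr2 -real_normK ?num_real //.
  by apply: sq_le; rewrite ?normr_ge0 ?entry_le_mxnorm.
by rewrite sumr_const card_ord mulr_natl.
Qed.

Lemma nbhs_enorm k (z : 'rV[R]_k) r : 0 < r ->
  nbhs z [set z' | enorm (z' - z) < r].
Proof.
move=> r0; rewrite -nbhs_nbhs_norm; exists (r / (k.+1)%:R) => /=.
  by rewrite divr_gt0 // ltr0n.
move=> z' /= hz; have hz' : `|z' - z| < r / (k.+1)%:R by rewrite -normrN opprB.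
apply: lt_sq; first exact: ltW.
rewrite enorm_sq.
apply: le_lt_trans (dotp_le_mxnorm _) _.
have hk : 0 < (k.+1)%:R :> R by rewrite ltr0n.
have h1 : (k%:R : R) <= (k.+1)%:R by rewrite ler_nat.
have hn := normr_ge0 (z' - z).
have hz2 : (k.+1)%:R * `|z' - z| < r by rewrite -ltr_pdivlMl // mulrC.
have hk0 : (0 : R) <= k%:R by rewrite ler0n.
have hK1 : (1 : R) <= (k.+1)%:R by rewrite ler1n.
set K := (k.+1)%:R in hk h1 hz2 hK1 *; set n := `|z' - z| in hn hz2 *.
have e1 : k%:R * n ^+ 2 <= K * n ^+ 2 by apply: ler_wpM2r; rewrite ?sqr_ge0.
have e2 : K * n ^+ 2 <= (K * n) ^+ 2.
  by rewrite exprMn ler_wpM2r ?sqr_ge0 // expr2 ler_peMl // ltW.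
have e3 : (K * n) ^+ 2 < r ^+ 2 by apply: ltrXn2r => //; rewrite mulr_ge0 // ltW.
lra.
Qed.


Lemma closed_cball k (x : 'rV[R]_k) r0 : closed [set z | enorm (z - x) <= r0].
Proof.
rewrite -openC openE => z /= nKz; rewrite /interior.
have e0 : 0 < enorm (z - x) - r0 by rewrite subr_gt0 ltNge; apply/negP.
have := nbhs_enorm z e0; apply: filterS => z' /= h1 h2.
have := enorm_triangle (z - z') (z' - x).
rewrite addrA subrK enormB; lra.
Qed.

Lemma bounded_cball k (x : 'rV[R]_k) r0 : bounded_set [set z | enorm (z - x) <= r0].
Proof.
exists (`|x| + r0); split; first by rewrite num_real.
move=> M hM z /= Kz; apply: le_trans (ltW hM).
have := ler_normD x (z - x); rewrite addrC subrK => H.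
apply: le_trans H _; rewrite lerD2l; apply: le_trans Kz.
exact: mxnorm_le_enorm.
Qed.

Lemma ball_cover k (x : 'rV[R]_k) (r0 : R) (P : R -> 'rV[R]_k -> Prop) :
  (forall z, enorm (z - x) <= r0 -> exists2 r, 0 < r &
     forall z' d, enorm (z' - z) < r -> 0 < d -> d < r -> P d z') ->
  exists2 d, 0 < d & forall z, enorm (z - x) <= r0 -> P d z.
Proof.
move=> H.
have cK : compact [set z | enorm (z - x) <= r0].
  apply: bounded_closed_compact; [exact: bounded_cball|exact: closed_cball].
move/compact_near_coveringP: cK => /(_ R (0:R)^'+ P _).
case.
- move=> z /H [r r0' Hr].
  exists ([set z' | enorm (z' - z) < r], [set d | 0 < d < r]).
    split; first exact: nbhs_enorm.
    near=> d; apply/andP; split; near: d; [exact: nbhs_right_gt | exact: nbhs_right_lt].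
  by move=> [z' d] /= [h1 /andP[h2 h3]]; apply: Hr.
- move=> e /= e0 He; exists (e / 2); first by rewrite divr_gt0.
  move=> z Kz; apply: He => //=; last by rewrite divr_gt0.
  by rewrite sub0r normrN gtr0_norm ?divr_gt0 // ltr_pdivrMr // ltr_pMr // ltr1n.
Unshelve. all: by end_near.
Qed.

End Aux.

Section Main.
Context {R : realType} {n m : nat} (U : set 'rV[R]_n) (V : set 'rV[R]_m)
  (f : 'rV[R]_n -> 'rV[R]_m -> R) (M : R)
  (hM : forall x y, U x -> V y -> `|f x y| <= M).

Lemma f_le_M x y : U x -> V y -> f x y <= M.
Proof. by move=> ux vy; apply: le_trans (hM ux vy); exact: ler_norm. Qed.

Lemma f_ge_M x y : U x -> V y -> - M <= f x y.
Proof. by move=> ux vy; have := hM ux vy; rewrite ler_norml => /andP[]. Qed.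

Lemma pen_ge0 (eps : R) k (v : 'rV[R]_k) : 0 < eps -> 0 <= (2 * eps)^-1 * enorm v ^+ 2.
Proof. by move=> e0; rewrite mulr_ge0 ?sqr_ge0 // invr_ge0 mulr_ge0 // ltW. Qed.

Lemma fep_ge eps x y z : 0 < eps -> U z -> V y ->
  f z y - (2 * eps)^-1 * enorm (z - x) ^+ 2 <= fep U f eps x y.
Proof.
move=> e0 uz vy; apply: sup_upper_bound; last by exists z.
split; first by exists (f z y - (2 * eps)^-1 * enorm (z - x) ^+ 2), z.
exists M => _ [z' uz' <-]; have := f_le_M uz' vy; have := pen_ge0 (z' - x) e0.
lra.
Qed.

Lemma fep_le eps x y c : (exists z, U z) ->
  (forall z, U z -> f z y - (2 * eps)^-1 * enorm (z - x) ^+ 2 <= c) ->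
  fep U f eps x y <= c.
Proof.
move=> [z uz] H; apply: ge_sup; first by exists (f z y - (2 * eps)^-1 * enorm (z - x) ^+ 2), z.
by move=> _ [z' uz' <-]; exact: H.
Qed.

Lemma f_le_fep eps x y : 0 < eps -> U x -> V y -> f x y <= fep U f eps x y.
Proof.
move=> e0 ux vy; have := fep_ge x e0 ux vy.
by rewrite subrr enorm0 expr0n mulr0 subr0.
Qed.

Lemma fep_le_M eps x y : 0 < eps -> U x -> V y -> fep U f eps x y <= M.
Proof.
move=> e0 ux vy; apply: fep_le; first by exists x.
move=> z uz; have := f_le_M uz vy; have := pen_ge0 (z - x) e0; lra.
Qed.

Lemma part2 eps eps' : 0 < eps' -> eps' <= eps ->
  forall x y, U x -> V y ->
    f x y <= fep U f eps' x y /\ fep U f eps' x y <= fep U f eps x y.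
Proof.
move=> e0 ee x y ux vy; split; first exact: f_le_fep.
have e1 : 0 < eps by apply: lt_le_trans ee.
apply: fep_le; first by exists x.
move=> z uz; apply: le_trans (fep_ge x e1 uz vy).
suff : (2 * eps)^-1 * enorm (z - x) ^+ 2 <= (2 * eps')^-1 * enorm (z - x) ^+ 2 by lra.
apply: ler_wpM2r; first exact: sqr_ge0.
rewrite lef_pV2 ?posrE ?mulr_gt0 //; lra.
Qed.


Lemma supnorm_ge x y : U x -> V y -> `|f x y| <= supnorm U V f.
Proof.
move=> ux vy; apply: sup_upper_bound; last by exists x, y.
split; first by exists `|f x y|, x, y.
by exists M => _ [x' [y' [ux' vy' ->]]]; exact: hM.
Qed.

Lemma delta_ge0 eps : 0 <= delta_of U V f eps.
Proof. by rewrite /delta_of mulr_ge0 ?sqrtr_ge0. Qed.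

Lemma delta_sq eps x y : 0 < eps -> U x -> V y ->
  delta_of U V f eps ^+ 2 = 4 * (eps * supnorm U V f).
Proof.
move=> e0 ux vy; have S0 : 0 <= supnorm U V f.
  by apply: le_trans (supnorm_ge ux vy).
rewrite /delta_of exprMn sqr_sqrtr; last by rewrite mulr_ge0 // ltW.
by congr (_ * _); rewrite expr2 -natrM.
Qed.

Lemma Udelta_x eps x : Udelta U (delta_of U V f eps) x -> U x.
Proof. by move=> H; apply: H; rewrite subrr enorm0 delta_ge0. Qed.

Lemma Udelta_far eps x y z : 0 < eps -> Udelta U (delta_of U V f eps) x -> V y ->
  U z -> delta_of U V f eps <= enorm (z - x) ->
  f z y - (2 * eps)^-1 * enorm (z - x) ^+ 2 <= f x y.
Proof.
move=> e0 ud vy uz hd; have ux := Udelta_x ud.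
have h1 := supnorm_ge uz vy; have h2 := supnorm_ge ux vy.
have hd2 : delta_of U V f eps ^+ 2 <= enorm (z - x) ^+ 2 by apply: sq_le; rewrite ?delta_ge0.
rewrite (delta_sq e0 ux vy) in hd2.
have : 2 * supnorm U V f <= (2 * eps)^-1 * enorm (z - x) ^+ 2.
  have -> : 2 * supnorm U V f = (2 * eps)^-1 * (4 * (eps * supnorm U V f)).
    by field; rewrite gt_eqF.
  by apply: ler_wpM2l => //; rewrite invr_ge0 mulr_ge0 // ltW.
move: h1 h2; rewrite !ler_norml => /andP[? ?] /andP[? ?]; lra.
Qed.

Lemma part3 eps : 0 < eps ->
  forall x y, Udelta U (delta_of U V f eps) x -> V y ->
    fep U f eps x y =
      sup [set f (x + t) y - (2 * eps)^-1 * enorm t ^+ 2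
          | t in [set t : 'rV[R]_n | enorm t < delta_of U V f eps]].
Proof.
move=> e0 x y ud vy; have ux := Udelta_x ud.
set d := delta_of U V f eps; set T := [set _ | t in _].
have uxt t : enorm t <= d -> U (x + t).
  by move=> ht; apply: ud; rewrite addrC addKr.
have [d0|dpos] := eqVneq d 0.
  have -> : T = set0.
    by apply/seteqP; split => // r [t /=]; rewrite d0 ltNge enorm_ge0.
  rewrite sup0; have S0 : supnorm U V f <= 0.
    have : eps * supnorm U V f <= 0.
      by move: d0; rewrite /d /delta_of => /eqP; rewrite mulf_eq0 pnatr_eq0 /= sqrtr_eq0.
    by rewrite pmulr_rle0.
  apply/le_anti/andP; split.
    apply: fep_le; first by exists x.
    move=> z uz; have := supnorm_ge uz vy; rewrite ler_norml => /andP[_ h].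
    have := pen_ge0 (z - x) e0; lra.
  apply: le_trans (f_le_fep e0 ux vy).
  have := supnorm_ge ux vy; rewrite ler_norml => /andP[h _]; lra.
have dgt0 : 0 < d by rewrite lt_def dpos delta_ge0.
have hsT : has_sup T.
  split; first by exists (f (x + 0) y - (2 * eps)^-1 * enorm (0 : 'rV[R]_n) ^+ 2), 0 => //=; rewrite enorm0.
  exists M => _ [t /= ht <-]; have := f_le_M (uxt _ (ltW ht)) vy.
  have := pen_ge0 t e0; lra.
have T0 : T (f x y).
  exists 0; first by rewrite /= enorm0.
  by rewrite addr0 enorm0 expr0n mulr0 subr0.
apply/le_anti/andP; split.
  apply: fep_le; first by exists x.
  move=> z uz; have [hz|hz] := ltP (enorm (z - x)) d.
    apply: sup_upper_bound => //; exists (z - x) => //.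
    by have -> : x + (z - x) = z by rewrite addrCA subrr addr0.
  apply: le_trans (Udelta_far e0 ud vy uz hz) _.
  exact: sup_upper_bound.
apply: ge_sup; first by exists (f x y).
move=> _ [t /= ht <-]; have := fep_ge x e0 (uxt _ (ltW ht)) vy.
by have -> : x + t - x = t by rewrite addrC addKr.
Qed.


Lemma fep_small eps x y e d0 : 0 < eps -> U x -> V y -> 0 < d0 ->
  (forall z, U z -> enorm (z - x) < d0 -> f z y < f x y + e) ->
  eps * (4 * M + 1) < d0 ^+ 2 ->
  fep U f eps x y <= f x y + e.
Proof.
move=> e0 ux vy d0p hz he.
have M0 : 0 <= M by apply: le_trans (hM ux vy).
apply: fep_le; first by exists x.
move=> z uz; have hp := pen_ge0 (z - x) e0.
have [h|h] := ltP (enorm (z - x)) d0.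
  by have := hz z uz h; lra.
have h2 : d0 ^+ 2 <= enorm (z - x) ^+ 2 by apply: sq_le => //; exact: ltW.
have h3 : 2 * M <= (2 * eps)^-1 * enorm (z - x) ^+ 2.
  have -> : 2 * M = (2 * eps)^-1 * (4 * M * eps) by field; rewrite gt_eqF.
  by apply: ler_wpM2l; [rewrite invr_ge0 mulr_ge0 // ltW | nra].
have := f_le_M uz vy; have := f_ge_M ux vy.
have : 0 <= e.
  have := hz x ux; rewrite subrr enorm0 => /(_ d0p); lra.
lra.
Qed.

Lemma part4 : usc_on (fun x y => U x /\ V y) f ->
  forall x y, U x -> V y ->
    (fun eps : R => fep U f eps x y) @ 0^'+ --> f x y.
Proof.
move=> husc x y ux vy; apply/cvgrPdist_lt => e e0.
have [d0 d0p Hd] := husc x y (conj ux vy) (e / 2) (divr_gt0 e0 (ltr0Sn _ 1)).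
have M0 : 0 <= M by apply: le_trans (hM ux vy).
have e1p : 0 < d0 ^+ 2 / (4 * M + 1) by rewrite divr_gt0 ?exprn_gt0 //; lra.
near=> eps.
have eps0 : 0 < eps by near: eps; exact: nbhs_right_gt.
have epsl : eps < d0 ^+ 2 / (4 * M + 1) by near: eps; exact: nbhs_right_lt.
have hle := f_le_fep eps0 ux vy.
have hfe : fep U f eps x y <= f x y + e / 2.
  apply: (fep_small eps0 ux vy d0p).
    move=> z uz hz; apply: Hd; first by split.
    by rewrite subrr enorm_row0.
  by rewrite -ltr_pdivlMr //; lra.
rewrite distrC ger0_norm; last by rewrite subr_ge0.
have : e / 2 < e by rewrite ltr_pdivrMr // ltr_pMr // ltr1n.
lra.
Unshelve. all: by end_near.
Qed.


Lemma sq_diff k (z w : 'rV[R]_k) :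
  enorm (z - w) ^+ 2 - enorm w ^+ 2 = enorm z ^+ 2 - 2 * dotp z w.
Proof. by rewrite !enorm_sq !(dotpBl, dotpBr) (dotpC w z); ring. Qed.

Lemma seg_end0 k (a b : 'rV[R]_k) : (1 - 0) *: a + 0 *: b = a.
Proof. by rewrite subr0 scale1r scale0r addr0. Qed.

Lemma seg_end1 k (a b : 'rV[R]_k) : (1 - 1) *: a + 1 *: b = b.
Proof. by rewrite subrr scale0r scale1r add0r. Qed.

Lemma part1 eps : 0 < eps ->
  (forall x, U x -> convex_on V (f x)) ->
  convex2_on U V (fun x y => fep U f eps x y + (2 * eps)^-1 * enorm x ^+ 2).
Proof.
move=> e0 hconv a1 a2 b1 b2 t ht hseg /=.
have h01 : (0 <= (0:R)) && ((0:R) <= 1) by apply/andP; split; [exact: lexx | exact: ler01].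
have h11 : (0 <= (1:R)) && ((1:R) <= 1) by apply/andP; split; [exact: ler01 | exact: lexx].
have [ua1 vb1] := hseg 0 h01; rewrite !seg_end0 in ua1 vb1.
have [ua2 vb2] := hseg 1 h11; rewrite !seg_end1 in ua2 vb2.
have [uxt vyt] := hseg t ht.
set xt := (1 - t) *: a1 + t *: a2; set yt := (1 - t) *: b1 + t *: b2.
set c := (2 * eps)^-1.
move: ht => /andP[t0 t1].
set F1 := fep U f eps a1 b1; set F2 := fep U f eps a2 b2.
suff : fep U f eps xt yt <= (1 - t) * (F1 + c * enorm a1 ^+ 2) +
          t * (F2 + c * enorm a2 ^+ 2) - c * enorm xt ^+ 2 by lra.
apply: fep_le; first by exists xt.
move=> z uz.
have hc := hconv z uz b1 b2 t (introT andP (conj t0 t1)) (fun s hs => (hseg s hs).2).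
have E1 := fep_ge a1 e0 uz vb1; have E2 := fep_ge a2 e0 uz vb2.
rewrite -/F1 -/c in E1; rewrite -/F2 -/c in E2.
have E1' := ler_wpM2l (x := 1 - t) (ltac:(lra)) E1.
have E2' := ler_wpM2l (x := t) t0 E2.
have id : enorm (z - xt) ^+ 2 - enorm xt ^+ 2 =
   (1 - t) * (enorm (z - a1) ^+ 2 - enorm a1 ^+ 2) + t * (enorm (z - a2) ^+ 2 - enorm a2 ^+ 2).
  by rewrite !sq_diff /xt dotpDr !dotpZr; ring.
have id' : c * (enorm (z - xt) ^+ 2 - enorm xt ^+ 2) =
   (1 - t) * (c * (enorm (z - a1) ^+ 2 - enorm a1 ^+ 2)) + t * (c * (enorm (z - a2) ^+ 2 - enorm a2 ^+ 2)).
  by rewrite id; ring.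
move: hc E1' E2' id'; rewrite /=.
set p := f z yt; set q1 := f z b1; set q2 := f z b2.
set n0 := enorm (z - xt) ^+ 2; set nx := enorm xt ^+ 2.
set n1 := enorm (z - a1) ^+ 2; set m1 := enorm a1 ^+ 2.
set n2 := enorm (z - a2) ^+ 2; set m2 := enorm a2 ^+ 2.
move=> hc E1' E2' id'.
rewrite -/c; lra.
Qed.

End Main.

Section P5.
Context {R : realType}.

Lemma pen_cont (c g R0 : R) : 0 <= c -> 0 < g -> 0 <= R0 ->
  exists2 eta, 0 < eta & forall k (a h : 'rV[R]_k), enorm a <= R0 -> enorm h < eta ->
    c * enorm a ^+ 2 - g < c * enorm (a + h) ^+ 2.
Proof.
move=> c0 g0 R00.
have K0 : 0 < c * (2 * R0 + 1) + 1 by have := mulr_ge0 c0 (ltW (_ : 0 < 2 * R0 + 1)); lra.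
exists (Num.min 1 (g / (c * (2 * R0 + 1) + 1))).
  by rewrite lt_min ltr01 divr_gt0.
move=> k a h ha; rewrite lt_min => /andP[h1 h2].
rewrite ltr_pdivlMr // in h2.
have := enorm_sq_lb a h; have := enorm_ge0 h; have := enorm_ge0 a => na nh lb.
have e1 : (2 * enorm a + enorm h) * enorm h <= (2 * R0 + 1) * enorm h.
  by apply: ler_wpM2r => //; lra.
have e2 : c * ((2 * enorm a + enorm h) * enorm h) <= c * ((2 * R0 + 1) * enorm h).
  exact: ler_wpM2l.
have e3 : c * enorm (a + h) ^+ 2 >= c * (enorm a ^+ 2 - (2 * enorm a + enorm h) * enorm h).
  exact: ler_wpM2l.
nra.
Qed.

Lemma vecE1 k (z x' x : 'rV[R]_k) : z - (z - x' + x) = x' - x.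
Proof. by apply/rowP => j; rewrite !mxE; ring. Qed.
Lemma vecE2 k (z x' x : 'rV[R]_k) : z - x' + x - x = z - x'.
Proof. by apply/rowP => j; rewrite !mxE; ring. Qed.
Lemma vecE3 k (w x' x : 'rV[R]_k) : w + (x' - x) - x' = w - x.
Proof. by apply/rowP => j; rewrite !mxE; ring. Qed.
Lemma vecE4 k (z x' x : 'rV[R]_k) : z - x' + x + (x' - x) = z.
Proof. by apply/rowP => j; rewrite !mxE; ring. Qed.
Lemma vecE5 k (a b c : 'rV[R]_k) : a - b + (c - a) = c - b.
Proof. by apply/rowP => j; rewrite !mxE; ring. Qed.
Lemma vecE9 k (a b c : 'rV[R]_k) : a - b + (b - c) = a - c.
Proof. by apply/rowP => j; rewrite !mxE; ring. Qed.
Lemma vecE6 k (x z' z : 'rV[R]_k) : x + (z' - z) - x = z' - z.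
Proof. by apply/rowP => j; rewrite !mxE; ring. Qed.
Lemma vecE7 k (x z' z : 'rV[R]_k) : z' - (x + (z' - z)) = z - x.
Proof. by apply/rowP => j; rewrite !mxE; ring. Qed.
Lemma vecE8 k (w x' x w0 : 'rV[R]_k) : w + (x' - x) - w0 = (w - w0) + (x' - x).
Proof. by apply/rowP => j; rewrite !mxE; ring. Qed.

Lemma Udelta_open n (U : set 'rV[R]_n) d x : open U -> Udelta U d x ->
  exists2 r, 0 < r & forall x', enorm (x' - x) < r -> Udelta U d x'.
Proof.
move=> hU ud.
have [r r0 Hr] : exists2 r, 0 < r & forall z, enorm (z - x) <= d ->
    (fun d z => forall w, enorm (w - z) < d -> U w) r z.
  apply: (ball_cover (P := fun e z => forall w, enorm (w - z) < e -> U w)) => z /ud uz.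
  have := hU; rewrite openE => /(_ z uz); rewrite /interior /= -nbhs_nbhs_norm.
  case=> rho rho0 Hrho; exists (rho / 2); first by rewrite divr_gt0.
  move=> z' e hz' e0 he w hw; apply: Hrho => /=.
  rewrite -normrN opprB; apply: le_lt_trans (mxnorm_le_enorm _) _.
  have := enorm_triangle (w - z') (z' - z); rewrite vecE9 => H.
  apply: le_lt_trans H _; have : rho / 2 + rho / 2 = rho by field.
  lra.
exists r => // x' hx' z hz.
have := Hr (z - x' + x); rewrite vecE2 => /(_ hz z); rewrite vecE1; exact.
Qed.


Context {n m : nat} (U : set 'rV[R]_n) (V : set 'rV[R]_m)
  (f : 'rV[R]_n -> 'rV[R]_m -> R) (M : R)
  (hM : forall x y, U x -> V y -> `|f x y| <= M)
  (husc : usc_on (fun x y => U x /\ V y) f).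

Lemma usc_at z y e : U z -> V y -> 0 < e -> exists2 d, 0 < d &
  forall z', U z' -> enorm (z' - z) < d -> f z' y < f z y + e.
Proof.
move=> uz vy e0; have [d d0 Hd] := husc (conj uz vy) e0.
exists d => // z' uz' h; apply: Hd; first by split.
by rewrite subrr enorm_row0.
Qed.

Lemma attain eps x y : 0 < eps -> Udelta U (delta_of U V f eps) x -> V y ->
  exists2 z, U z & fep U f eps x y = f z y - (2 * eps)^-1 * enorm (z - x) ^+ 2.
Proof.
move=> e0 ud vy; set d := delta_of U V f eps; set c := (2 * eps)^-1.
have ux := Udelta_x ud.
have c0 : 0 <= c by rewrite invr_ge0 mulr_ge0 // ltW.
set s := fep U f eps x y.
have [[z Kz hz]|H] := pselect (exists2 z, enorm (z - x) <= d & s <= f z y - c * enorm (z - x) ^+ 2).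
  exists z; first exact: ud.
  by apply/le_anti; rewrite hz /=; exact: (fep_ge hM x e0 (ud _ Kz) vy).
have H' : forall z, enorm (z - x) <= d -> f z y - c * enorm (z - x) ^+ 2 < s.
  by move=> z Kz; rewrite ltNge; apply/negP => hz; apply: H; exists z.
have [r r0 Hr] : exists2 r, 0 < r & forall z, enorm (z - x) <= d ->
    (enorm (z - x) <= d -> f z y - c * enorm (z - x) ^+ 2 < s - r).
  apply: (ball_cover (P := fun r z => enorm (z - x) <= d ->
              f z y - c * enorm (z - x) ^+ 2 < s - r)) => z0 Kz0.
  set g := s - (f z0 y - c * enorm (z0 - x) ^+ 2).
  have g0 : 0 < g by rewrite subr_gt0 H'.
  have g4 : 0 < g / 4 by rewrite divr_gt0.
  have [d1 d10 Hd1] := usc_at (ud _ Kz0) vy g4.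
  have [eta eta0 Heta] := pen_cont c0 g4 (delta_ge0 U V f eps).
  exists (Num.min d1 (Num.min eta (g / 4))).
    by rewrite !lt_min d10 eta0 g4.
  move=> z' r' + r'0; rewrite !lt_min => /andP[h1 /andP[h2 h3]] /andP[_ /andP[_ r'3]] Kz'.
  have hf := Hd1 z' (ud _ Kz') h1.
  have hp := Heta _ (z0 - x) (z' - z0) Kz0 h2.
  rewrite vecE5 in hp.
  have : g / 4 + g / 4 + g / 4 + g / 4 = g by field.
  have hg : g = s - (f z0 y - c * enorm (z0 - x) ^+ 2) by [].
  lra.
have : s <= s - r.
  apply: fep_le; first by exists x.
  move=> z uz; have [Kz|Kz] := leP (enorm (z - x)) d.
    exact: ltW (Hr z Kz Kz).
  apply: le_trans (Udelta_far hM e0 ud vy uz (ltW Kz)) _.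
  have := Hr x; rewrite subrr enorm0 expr0n mulr0 subr0 => /(_ (delta_ge0 U V f eps)).
  by move=> /(_ (delta_ge0 U V f eps)) /ltW.
lra.
Qed.


Lemma Udelta_far2 eps x y z : 0 < eps -> Udelta U (delta_of U V f eps) x -> V y ->
  U z -> delta_of U V f eps <= enorm (z - x) ->
  f z y - (2 * eps)^-1 * enorm (z - x) ^+ 2 <= - supnorm U V f.
Proof.
move=> e0 ud vy uz hd; have ux := Udelta_x ud.
have h1 := supnorm_ge hM uz vy.
have hd2 : delta_of U V f eps ^+ 2 <= enorm (z - x) ^+ 2 by apply: sq_le; rewrite ?delta_ge0.
rewrite (delta_sq hM e0 ux vy) in hd2.
have : 2 * supnorm U V f <= (2 * eps)^-1 * enorm (z - x) ^+ 2.
  have -> : 2 * supnorm U V f = (2 * eps)^-1 * (4 * (eps * supnorm U V f)).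
    by field; rewrite gt_eqF.
  by apply: ler_wpM2l => //; rewrite invr_ge0 mulr_ge0 // ltW.
move: h1; rewrite !ler_norml => /andP[? ?]; lra.
Qed.

Lemma fep_usc eps : 0 < eps -> open U ->
  usc_on (fun x y => Udelta U (delta_of U V f eps) x /\ V y) (fep U f eps).
Proof.
move=> e0 hU x y [ud vy] e epos.
set d := delta_of U V f eps; set c := (2 * eps)^-1; set s := fep U f eps x y.
have c0 : 0 <= c by rewrite invr_ge0 mulr_ge0 // ltW.
have e4 : 0 < e / 4 by rewrite divr_gt0.
have [r r0 Hr] : exists2 r, 0 < r & forall w, enorm (w - x) <= d ->
    (enorm (w - x) <= d -> forall x' y', Udelta U d x' -> V y' ->
       enorm (row_mx (x' - x) (y' - y)) < r ->
       f (w + (x' - x)) y' - c * enorm (w - x) ^+ 2 < s + e / 2).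
  apply: (ball_cover (P := fun r w => enorm (w - x) <= d -> forall x' y', Udelta U d x' -> V y' ->
       enorm (row_mx (x' - x) (y' - y)) < r ->
       f (w + (x' - x)) y' - c * enorm (w - x) ^+ 2 < s + e / 2)) => w0 Kw0.
  have uw0 := ud _ Kw0.
  have [d1 d10 Hd1] := husc (conj uw0 vy) e4.
  have [eta eta0 Heta] := pen_cont c0 e4 (delta_ge0 U V f eps).
  exists (Num.min (d1 / 2) eta); first by rewrite lt_min eta0 divr_gt0.
  move=> w r' + r'0; rewrite !lt_min => /andP[h1 h2] /andP[h3 _] Kw x' y' ud' vy' hxy.
  have uw' : U (w + (x' - x)) by apply: ud'; rewrite vecE3.
  have hrow : enorm (row_mx (w + (x' - x) - w0) (y' - y)) < d1.
    have -> : row_mx (w + (x' - x) - w0) (y' - y) =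
              row_mx (w - w0) 0 + row_mx (x' - x) (y' - y).
      by rewrite add_row_mx add0r vecE8.
    apply: le_lt_trans (enorm_triangle _ _) _; rewrite enorm_row0.
    have : d1 / 2 + d1 / 2 = d1 by field.
    lra.
  have hf := Hd1 _ _ (conj uw' vy') hrow.
  have hp := Heta _ (w0 - x) (w - w0) Kw0 h2; rewrite vecE5 in hp.
  have hs := fep_ge hM x e0 uw0 vy.
  have : e / 4 + e / 4 = e / 2 by field.
  rewrite -/c -/s in hs; lra.
exists r => // x' y' [ud' vy'] hxy.
have : fep U f eps x' y' <= s + e / 2.
  apply: fep_le; first by exists x'; exact: Udelta_x ud'.
  move=> z uz; have [Kz|Kz] := leP (enorm (z - x')) d.
    have Kw : enorm (z - x' + x - x) <= d by rewrite vecE2.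
    have := Hr _ Kw Kw x' y' ud' vy' hxy; rewrite vecE4 vecE2 => /ltW; exact.
  have := Udelta_far2 e0 ud' vy' uz (ltW Kz).
  have := f_le_fep hM e0 (Udelta_x ud) vy.
  have := supnorm_ge hM (Udelta_x ud) vy; rewrite ler_norml => /andP[h1 _].
  rewrite -/s; have : 0 < e / 2 by rewrite divr_gt0.
  lra.
have : e / 2 < e by rewrite ltr_pdivrMr // ltr_pMr // ltr1n.
lra.
Qed.

Lemma fep_jet eps (F0 : set (jet R n)) : 0 < eps -> open U ->
  negativity_property F0 ->
  subharmonic (fun x y => U x /\ V y) (FsharpP (m := m) F0) f ->
  forall x y, Udelta U (delta_of U V f eps) x /\ V y ->
  forall p (A : 'M[R]_(n + m)), A^T = A ->
  upper_contact_jet (fun x y => Udelta U (delta_of U V f eps) x /\ V y)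
     (fep U f eps) x y p A ->
  FsharpP (m := m) F0 (fep U f eps x y) p A.
Proof.
move=> e0 hU hneg [_ hsub] x y [ud vy] p A hA [rho rho0 Hj].
have [z uz hz] := attain e0 ud vy.
have [r1 r10 Hr1] := Udelta_open hU ud.
have jf : upper_contact_jet (fun x y => U x /\ V y) f z y p A.
  exists (Num.min rho r1); first by rewrite lt_min rho0 r10.
  move=> z' y' [uz' vy']; rewrite lt_min => /andP[hv1 hv2].
  set x' := x + (z' - z).
  have ux' : Udelta U (delta_of U V f eps) x'.
    by apply: Hr1; rewrite /x' vecE6; apply: le_lt_trans (enorm_row_l _ _) hv2.
  have := Hj x' y' (conj ux' vy'); rewrite /x' vecE6 => /(_ hv1) Hj'.
  have := fep_ge hM x' e0 uz' vy'; rewrite /x' vecE7 => hfe.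
  rewrite hz in Hj'; lra.
have [hG hpsd] := hsub z y (conj uz vy) p A hA jf.
split => // G; apply: hneg (hG G) _.
rewrite hz; have := pen_ge0 (z - x) e0; lra.
Qed.

End P5.

Unset Implicit Arguments.

Theorem lemma4p2 (R : realType) (n m : nat)
  (U : set 'rV[R]_n) (V : set 'rV[R]_m) (f : 'rV[R]_n -> 'rV[R]_m -> R) :
  open U -> open V ->
  usc_on (fun x y => U x /\ V y) f ->
  (exists M : R, forall x y, U x -> V y -> `|f x y| <= M) ->
  [/\
   (* (i) *)
   (forall eps : R, 0 < eps ->
      (forall x, U x -> convex_on V (f x)) ->
      convex2_on U V (fun x y => fep U f eps x y + (2 * eps)^-1 * enorm x ^+ 2)),
   (* (ii) *)
   (forall eps eps' : R, 0 < eps' -> eps' <= eps ->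
      forall x y, U x -> V y ->
        f x y <= fep U f eps' x y /\ fep U f eps' x y <= fep U f eps x y),
   (* (iii) *)
   (forall eps : R, 0 < eps ->
      forall x y, Udelta U (delta_of U V f eps) x -> V y ->
        fep U f eps x y =
          sup [set f (x + t) y - (2 * eps)^-1 * enorm t ^+ 2
              | t in [set t : 'rV[R]_n | enorm t < delta_of U V f eps]]),
   (* (iv) *)
   (forall x y, U x -> V y ->
      (fun eps : R => fep U f eps x y) @ 0^'+ --> f x y) &
   (* (v) *)
   (forall eps : R, 0 < eps ->
      forall F0 : set (jet R n),
        cc_primitive_subequation F0 -> negativity_property F0 ->
        subharmonic (fun x y => U x /\ V y) (FsharpP (m := m) F0) f ->
        subharmonic (fun x y => Udelta U (delta_of U V f eps) x /\ V y)
                    (FsharpP (m := m) F0) (fep U f eps))].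

Proof.
move=> hU hV husc [M hM].
split.
- by move=> eps e0 hc; apply: (part1 hM e0 hc).
- by move=> eps eps' e0 ee x y ux vy; apply: (part2 hM e0 ee ux vy).
- by move=> eps e0 x y ud vy; apply: (part3 hM e0 ud vy).
- by move=> x y ux vy; apply: (part4 hM husc ux vy).
- move=> eps e0 F0 hF hneg hsub; split; first exact: (fep_usc hM husc e0 hU).
  move=> x y hxy p A hA hj; exact: (fep_jet hM husc e0 hU hneg hsub hxy hA hj).
Qed.
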